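(* Let $F=P_{\ell_1}\cup\cdots\cup P_{\ell_k}$ be a linear forest with $k\ge2$, $\ell_1\ge\cdots\ge\ell_k\ge2$ and $\ell_i\ne 3$ for all $i$. If the graph $P_{2\delta_F+1}\cup P_{\delta_F}$ is $F$-free, then either $F\in\{5P_5,\ 2P_\ell,\ P_{\ell+1}\cup P_\ell\}$ for some integer $\ell$, or $F\in\{P_{\ell+2}\cup P_\ell,\ 2P_\ell\cup P_2\}$ for some odd integer $\ell$.
   Context: $P_m$ is the path on $m$ vertices; $G\cup H$ is disjoint union and $tG$ is $t$ disjoint copies of $G$. $\delta_F=\sum_{i=1}^k\lfloor \ell_i/2\rfloor-1$. A graph is $F$-free if it has no subgraph isomorphic to $F$. *)

(* Defs.v *)
From mathcomp Require Import all_boot.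
Set Implicit Arguments. Unset Strict Implicit. Unset Printing Implicit Defensive.

(* Linear forest P_{l_1} u ... u P_{l_k}, encoded by the list [:: l_1; ...; l_k].
   Vertices: pairs (i, a) with i < k and a < l_i; edges join (i,a),(i,a+1). *)
Definition lf_vert (ls : seq nat) : finType :=
  {i : 'I_(size ls) & 'I_(nth 0 ls i)}.

Arguments lf_vert : clear implicits.
Definition lf_edge (ls : seq nat) : rel (lf_vert ls) :=
  fun x y => (val (tag x) == val (tag y)) &&
             (((val (tagged x)).+1 == val (tagged y)) || ((val (tagged y)).+1 == val (tagged x))).

Definition contains_subgraph (VH VG : finType) (eH : rel VH) (eG : rel VG) : Prop :=
  exists f : VH -> VG, injective f /\ forall x y, eH x y -> eG (f x) (f y).

Definition lf_free (ms ls : seq nat) : Prop :=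
  ~ contains_subgraph (@lf_edge ls) (@lf_edge ms).

Definition deltaF (ls : seq nat) : nat := (\sum_(l <- ls) l./2) - 1.

(* Main.v *)
Require Import Defs.
From mathcomp Require Import all_boot zify.

Lemma sub_sum (k : nat) (P Q : pred 'I_k) (F : 'I_k -> nat) :
  (forall j, P j -> Q j) -> \sum_(j < k | P j) F j <= \sum_(j < k | Q j) F j.
Proof. move=> H; apply: sub_le_big => // x y; exact: leq_addr. Qed.

Section Emb.
Variables (ls : seq nat) (m : nat -> bool) (p q : nat).
Let k := size ls.
Let a j := nth 0 ls j.
Hypothesis Hp : \sum_(j < k | m j) a j <= p.
Hypothesis Hq : \sum_(j < k | ~~ m j) a j <= q.

Definition compo (x : lf_vert ls) : 'I_(size [:: q; p]) :=
  @Ordinal 2 (m (val (tag x))) (leq_b1 (m (val (tag x)))).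

Definition offs (x : lf_vert ls) : nat :=
  \sum_(j < k | (j < val (tag x)) && (m j == m (val (tag x)))) a j.

Lemma offs_bound x : offs x + val (tagged x) < nth 0 [:: q; p] (compo x).
Proof.
case: x => i t /=. rewrite /offs /=.
have Hi : val t < a i by exact: ltn_ord.
have H1 : \sum_(j < k | (j < i) && (m j == m i)) a j + a i
          <= \sum_(j < k | m j == m i) a j.
  rewrite [X in _ <= X](bigD1 i) /=; last by rewrite eqxx.
  rewrite addnC leq_add2l.
  apply: sub_sum => j /andP [H1 H2].
  rewrite H2 /=. apply/eqP => E. by rewrite E ltnn in H1.
have H2 : \sum_(j < k | m j == m i) a j <= nth 0 [:: q; p] (m i).
  case E: (m i) => /=.
    apply: leq_trans Hp. apply: eq_leq. apply: eq_bigl => j. by case: (m j).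
  apply: leq_trans Hq. apply: eq_leq. apply: eq_bigl => j. by case: (m j).
rewrite /compo /=.
apply: leq_trans H2. apply: leq_trans H1. by rewrite ltn_add2l.
Qed.

Definition femb (x : lf_vert ls) : lf_vert [:: q; p] :=
  @Tagged _ (compo x) (fun c => 'I_(nth 0 [:: q; p] c)) (Ordinal (offs_bound x)).

Lemma offs_lt (x y : lf_vert ls) : val (tag x) < val (tag y) ->
  m (val (tag x)) = m (val (tag y)) ->
  offs x + val (tagged x) < offs y.
Proof.
case: x => i t; case: y => i' t' /= Hlt Hm.
rewrite /offs /= -Hm.
have Hi : val t < a i by exact: ltn_ord.
apply: (@leq_trans (\sum_(j < k | (j < i) && (m j == m i)) a j + a i)).
  by rewrite ltn_add2l.
rewrite [X in _ <= X](bigD1 i) /=; last by rewrite Hlt eqxx.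
rewrite addnC leq_add2l.
apply: sub_sum => j /andP [H1 H2].
rewrite H2 andbT (ltn_trans H1 Hlt) /=. apply/eqP => E. by rewrite E ltnn in H1.
Qed.

Lemma femb_inj : injective femb.
Proof.
move=> x y E.
have Ec : val (compo x) = val (compo y) by rewrite /femb in E; move: (congr1 (fun z : lf_vert [:: q; p] => val (tag z)) E).
have Ev : offs x + val (tagged x) = offs y + val (tagged y).
  by move: (congr1 (fun z : lf_vert [:: q; p] => val (tagged z)) E).
rewrite /compo /= in Ec.
have Em : m (val (tag x)) = m (val (tag y)) by case: (m _) (m _) Ec => [] [].
have Ei : val (tag x) = val (tag y).
  case: (ltngtP (val (tag x)) (val (tag y))) => // Hlt.
  - have := offs_lt _ _ Hlt Em. lia.
  - have := offs_lt _ _ Hlt (esym Em). lia.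
case: x y Ei Ev E Em Ec => i t [i' t'] /= Ei.
have Eii : i = i' by apply: val_inj.
subst i'.
have Eo : offs (@existT 'I_(size ls) (fun i0 => 'I_(nth 0 ls i0)) i t) = offs (@existT 'I_(size ls) (fun i0 => 'I_(nth 0 ls i0)) i t') by [].
rewrite Eo => Ev _ _ _.
have -> : t = t'; last by []. apply: val_inj; apply/eqP; rewrite -(eqn_add2l (offs (existT _ i t'))); apply/eqP; exact: Ev.
Qed.

Lemma femb_edge x y : lf_edge x y -> lf_edge (femb x) (femb y).
Proof.
case: x => i t; case: y => i' t'. rewrite /lf_edge /= => /andP [/eqP Ei Ht].
have Eii : i = i' by apply: val_inj.
subst i'. rewrite /= eqxx /=.
have Eo : offs (@existT 'I_(size ls) (fun i0 => 'I_(nth 0 ls i0)) i t) = offs (@existT 'I_(size ls) (fun i0 => 'I_(nth 0 ls i0)) i t') by [].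
rewrite Eo. move: Ht. rewrite -!addnS !eqn_add2l. by [].
Qed.

Lemma embed : contains_subgraph (@lf_edge ls) (@lf_edge [:: q; p]).
Proof. exists femb; split; [exact: femb_inj | exact: femb_edge]. Qed.
End Emb.
Lemma crossing (f : nat -> nat) c n : c < f 0 -> f n <= c ->
  exists i, [/\ i < n, c < f i & f i.+1 <= c].
Proof.
move=> h0; elim: n => [|n IH] hn; first lia.
case: (ltnP c (f n)) => h.
- by exists n.
- have [i [h1 h2 h3]] := IH h. exists i; split => //. lia.
Qed.

Section Main.
Variable ls : seq nat.
Let k := size ls.
Let a j := nth 0 ls j.
Hypothesis Hfree : lf_free [:: (deltaF ls).*2.+1; deltaF ls] ls.
Hypothesis A2 : forall j, j < k -> 2 <= a j.
Hypothesis A3 : forall j, j < k -> a j != 3.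
Hypothesis Hk : 2 <= k.

Definition HH := \sum_(0 <= j < k) (a j)./2.
Definition oo := \sum_(0 <= j < k) odd (a j).
Definition TT i := \sum_(0 <= j < k | i <= j) a j.

Lemma deltaE : deltaF ls = HH - 1.
Proof. by rewrite /deltaF (big_nth 0). Qed.

Lemma HH_lb3 : 3 <= k -> (a 0)./2 + (a 1)./2 + (a 2)./2 <= HH.
Proof.
move=> h3. rewrite /HH big_ltn; last lia.
rewrite big_ltn; last lia. rewrite big_ltn; last lia. lia.
Qed.

Lemma HH_lb4 : 4 <= k -> (a 0)./2 + (a 1)./2 + (a 2)./2 + (a 3)./2 <= HH.
Proof.
move=> h3. rewrite /HH big_ltn; last lia.
rewrite big_ltn; last lia. rewrite big_ltn; last lia. rewrite big_ltn; last lia. lia.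
Qed.

Lemma HH_pos : 1 <= HH.
Proof.
have h : 0 < k by lia.
have := A2 _ h. rewrite /HH big_ltn //. lia.
Qed.

Lemma S_eq : \sum_(0 <= j < k) a j = HH.*2 + oo.
Proof.
rewrite /HH /oo -muln2 big_distrl /= -big_split /=.
apply: eq_bigr => j _. have := odd_double_half (a j). lia.
Qed.

Lemma nomask (m : nat -> bool) :
  oo < \sum_(0 <= j < k | m j) a j -> \sum_(0 <= j < k | m j) a j <= HH - 1 -> False.
Proof.
move=> h1 h2. apply: Hfree. rewrite deltaE.
have hS := S_eq. have hp := HH_pos.
rewrite (bigID m) /= in hS.
apply: (embed ls m).
  by rewrite -(big_mkord m (fun j => nth 0 ls j)).
rewrite -(big_mkord (fun j => ~~ m j) (fun j => nth 0 ls j)). move: hS h2 h1; rewrite /a /k => hS h2 h1. rewrite -(leq_add2l (\sum_(0 <= i < size ls | m i) nth 0 ls i)) hS. lia.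
Qed.

Lemma Trec i : i < k -> TT i = a i + TT i.+1.
Proof.
move=> hi. rewrite /TT big_mkcond /= (bigD1_seq i) /=; last first.
  exact: iota_uniq. by rewrite mem_index_iota.
rewrite leqnn. congr (_ + _).
rewrite [in RHS]big_mkcond /= big_mkcond /=. apply: eq_bigr => j _.
by case: (ltngtP i j) => h.
Qed.

Lemma Tk : TT k = 0.
Proof.
rewrite /TT big_nat_cond big1 // => j /andP [/andP [_ h1] h2]. lia.
Qed.

Lemma T0 : TT 0 = \sum_(0 <= j < k) a j.
Proof. rewrite /TT. apply: eq_bigl => j. exact: leq0n. Qed.

Lemma sum5 : HH <= oo.*2 -> forall j, j < k -> a j = 5.
Proof.
move=> hle.
have E : HH = \sum_(0 <= j < k) ((a j)./2 - (odd (a j)).*2) + oo.*2.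
  rewrite /HH /oo -muln2 big_distrl /= -big_split /=.
  apply: eq_big_nat => j hj. have := A2 _ (proj2 (andP hj) : j < k).
  have := A3 _ (proj2 (andP hj) : j < k). lia.
move=> j hj.
rewrite (bigD1_seq j) /= in E; last first.
  exact: iota_uniq. by rewrite mem_index_iota.
have := A2 _ hj. have := A3 _ hj. lia.
Qed.


Hypothesis Mono : forall i j, i <= j -> j < k -> a j <= a i.

Lemma main3 : 3 <= k -> ls = nseq 5 5 \/ exists l, odd l /\ ls = [:: l; l; 2].
Proof.
move=> h3.
have hp := HH_pos. have hS := S_eq.
have [i [hik hoi hoi1]] : exists i, [/\ i < k, oo < TT i & TT i.+1 <= oo].
  apply: crossing; last by rewrite Tk.
  rewrite T0 hS. lia.
case: (leqP (TT i) (HH - 1)) => hT.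
  exfalso. exact: (nomask (fun j => i <= j) hoi hT).
have Ei := Trec _ hik.
have hai : \sum_(0 <= j < k | j == i) a j = a i.
  rewrite big_mkcond (bigD1_seq i) /= ?eqxx; last first.
    exact: iota_uniq. by rewrite mem_index_iota.
  rewrite big1 ?addn0 // => j /negbTE ->. done.
case: (leqP (a i) oo) => hao.
- have h2o : HH <= oo.*2 by lia.
  have all5 := sum5 h2o.
  have eo : oo = k.
    rewrite /oo (eq_big_nat _ _ (F2 := fun _ => 1)); last first.
      move=> j hj. by rewrite all5 //; lia.
    by rewrite sum_nat_const_nat muln1 subn0.
  have eh : HH = k.*2.
    rewrite /HH (eq_big_nat _ _ (F2 := fun _ => 2)); last first.
      move=> j hj. by rewrite all5 //; lia.
    rewrite sum_nat_const_nat subn0. lia.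
  have [c ec] : exists c, TT i.+1 = 5 * c.
    exists (\sum_(0 <= j < k) (i.+1 <= j : nat)).
    rewrite big_distrr /= /TT big_mkcond /=. apply: eq_big_nat => j hj.
    rewrite all5; last lia. by case: (i.+1 <= j).
  have e5 := all5 _ hik.
  have hk5 : k = 5 by lia.
  left. apply: (@eq_from_nth _ 0). by rewrite size_nseq.
  move=> j hj. rewrite nth_nseq. have hj5 : j < 5 by rewrite -hk5.
  rewrite hj5. exact: all5.
- case: (leqP (a i) (HH - 1)) => hah.
    exfalso. apply: (nomask (fun j => j == i)); rewrite hai //.
  have hb := HH_lb3 h3.
  have a0 := A2 _ (_ : 0 < k). have a1 := A2 _ (_ : 1 < k). have a2 := A2 _ (_ : 2 < k).
  have b0 := A3 _ (_ : 0 < k). have b1 := A3 _ (_ : 1 < k). have b2 := A3 _ (_ : 2 < k).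
  have m01 := Mono 0 1. have m12 := Mono 1 2.
  have ai2 := A2 _ hik. have ai3 := A3 _ hik.
  case: i hik hoi hoi1 hT Ei hai hao hah ai2 ai3 => [|[|i]] hik hoi hoi1 hT Ei hai hao hah ai2 ai3.
  + exfalso. rewrite T0 hS in Ei.
    have := a1 ltac:(lia). have := a2 ltac:(lia). lia.
  + right. exists (a 1).
    have k3 : k = 3.
      case: (leqP k 3) => hk4; first lia.
      have := HH_lb4 hk4. have := A2 3 hk4. have := A3 3 hk4.
      have := a0 ltac:(lia). have := a1 ltac:(lia). have := a2 ltac:(lia).
      have := b0 ltac:(lia). have := b1 ltac:(lia). have := b2 ltac:(lia).
      have := m01 ltac:(lia) ltac:(lia). lia.
    have := a0 ltac:(lia). have := a1 ltac:(lia). have := a2 ltac:(lia).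
    have := b0 ltac:(lia). have := b1 ltac:(lia). have := b2 ltac:(lia).
    have := m01 ltac:(lia) ltac:(lia). move=> *.
    have ho : odd (a 1) by lia.
    have e0 : a 0 = a 1 by lia.
    have e2 : a 2 = 2 by lia.
    split => //. apply: (@eq_from_nth _ 0). by rewrite /= -/k k3.
    move=> j hj. have hj3 : j < 3 by rewrite -k3.
    by case: j hj hj3 => [|[|[|j]]] //= _ _; rewrite -/(a _) ?e0 ?e2.
  + exfalso.
    have mi0 := Mono 0 i.+2. have mi1 := Mono 1 i.+2. have mi2 := Mono 2 i.+2.
    have := mi0 ltac:(lia) hik. have := mi1 ltac:(lia) hik. have := mi2 ltac:(lia) hik.
    lia.
Qed.

End Main.


Theorem mainTheorem4 (ls : seq nat) :
  2 <= size ls ->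
  sorted geq ls ->
  all (fun l => 2 <= l) ls ->
  all (fun l => l != 3) ls ->
  lf_free [:: (deltaF ls).*2.+1; deltaF ls] ls ->
  (ls = nseq 5 5 \/
   (exists l : nat, ls = [:: l; l] \/ ls = [:: l.+1; l]) \/
   (exists l : nat, odd l /\ (ls = [:: l.+2; l] \/ ls = [:: l; l; 2]))).
Proof.
move=> hk hs hall h3 hfree.
have A2 : forall j, j < size ls -> 2 <= nth 0 ls j.
  move=> j hj. exact: (allP hall _ (mem_nth 0 hj)).
have A3 : forall j, j < size ls -> nth 0 ls j != 3.
  move=> j hj. exact: (allP h3 _ (mem_nth 0 hj)).
have Mono : forall i j, i <= j -> j < size ls -> nth 0 ls j <= nth 0 ls i.
  move=> i j hij hj.
  have tr : transitive geq by move=> y x z h1 h2; exact: leq_trans h2 h1.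
  have rf : reflexive geq by move=> x; exact: leqnn.
  apply: (sorted_leq_nth tr rf 0 hs) => //; rewrite inE; lia.
case: (ltngtP (size ls) 2) => hk2.
- lia.
- have := main3 ls hfree A2 A3 hk Mono hk2.
  case => [->|[l [ho ->]]]; [by left | by right; right; exists l; split => //; right].
- have hn := nomask ls hfree A2 hk (fun j => j == 1).
  case: ls hk hs hall h3 hfree A2 A3 Mono hk2 hn => [|x [|y [|z r]]] //= _ hs hall h3 _ A2 A3 _ _ hn.
  have x2 := A2 0 isT. have y2 := A2 1 isT. have x3 := A3 0 isT. have y3 := A3 1 isT.
  have xy : y <= x by move: hs => /andP [].
  rewrite /= in x2 y2 x3 y3.
  have eH : HH [:: x; y] = x./2 + y./2.
    by rewrite /HH /= big_ltn // big_ltn // big_geq //= addn0.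
  have eo : oo [:: x; y] = odd x + odd y.
    by rewrite /oo /= big_ltn // big_ltn // big_geq //= addn0.
  have es : \sum_(0 <= j < 2 | j == 1) nth 0 [:: x; y] j = y.
    by rewrite big_mkcond /= big_ltn // big_ltn // big_geq //=  addn0.
  rewrite /= es eH eo in hn.
  case: (leqP y (x./2 + y./2 - 1)) => hy.
    exfalso. apply: hn => //. lia.
  have : x = y \/ x = y.+1 \/ (x = y.+2 /\ odd y) by lia.
  case => [->|[->|[-> ho]]].
  + by right; left; exists y; left.
  + by right; left; exists y; right.
  + by right; right; exists y; split => //; left.
Qed.
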